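(* Let $\mathcal{C}$ be the structure described in the context. Then $R(x,y)$ forms an antichain tree modulo $\mathrm{Th}(\mathcal{C})$: there is $\langle c_\eta\rangle_{\eta\in{}^{\omega>}2}$ in a monster model of $\mathrm{Th}(\mathcal{C})$ such that for every $X\subseteq{}^{\omega>}2$, $\{R(x,c_\eta):\eta\in X\}$ is consistent if and only if $X$ is an antichain.
   Context: ${}^{\omega>}2$ is the binary tree of finite $0/1$-sequences with initial-segment order $\trianglelefteq$; ${}^{n>}2$ is the set of sequences of length $<n$. A set $X$ is an antichain if its elements are pairwise $\trianglelefteq$-incomparable; $X\subseteq{}^{n>}2$ is a maximal antichain in ${}^{n>}2$ if it is an antichain not properly contained in any antichain of ${}^{n>}2$ (a maximal antichain in ${}^{n>}2$ is also maximal in ${}^{m>}2$ for $m\ge n$). The language is $\{R\}$ with $R$ binary. $\mathcal{C}$ has universe the disjoint union of $A=\{a_X: X$ a maximal antichain in ${}^{n>}2$ for some $n<\omega\}$ and $B=\{b_\eta:\eta\in{}^{\omega>}2\}$, and $R^{\mathcal{C}}=\{(a_X,b_\eta): \eta\in X\}$. (This is the union of the finite structures $\mathcal{C}_n$ with universe $\{a_X:X$ maximal antichain in ${}^{n>}2\}\cup\{b_\eta:\eta\in{}^{n>}2\}$ and the same relation.) *)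

(* Defs.v *)
From Stdlib Require Import List Arith.
Import ListNotations.

(* Nodes of the binary tree ^{omega>}2: finite 0/1-sequences. *)
Definition node := list bool.

Definition initseg (s t : node) : Prop := exists u, t = s ++ u.

Definition antichain (X : node -> Prop) : Prop :=
  forall s t, X s -> X t -> s <> t -> ~ initseg s t /\ ~ initseg t s.

Definition below (n : nat) (X : node -> Prop) : Prop :=
  forall s, X s -> length s < n.

Definition max_antichain_in (n : nat) (X : node -> Prop) : Prop :=
  below n X /\ antichain X /\
  forall Y : node -> Prop, below n Y -> antichain Y ->
    (forall s, X s -> Y s) -> forall s, Y s -> X s.

Definition MaxAC := { X : node -> Prop | exists n, max_antichain_in n X }.

Inductive Cuniv : Type :=
| a_ : MaxAC -> Cuniv
| b_ : node -> Cuniv.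

Definition RC (u v : Cuniv) : Prop :=
  match u, v with
  | a_ X, b_ eta => proj1_sig X eta
  | _, _ => False
  end.

Inductive form : Type :=
| fR : nat -> nat -> form
| fEq : nat -> nat -> form
| fTrue : form
| fFalse : form
| fNot : form -> form
| fAnd : form -> form -> form
| fOr : form -> form -> form
| fImp : form -> form -> form
| fAll : nat -> form -> form
| fEx : nat -> form -> form.

Definition upd {M : Type} (v : nat -> M) (i : nat) (m : M) : nat -> M :=
  fun j => if Nat.eqb j i then m else v j.

Fixpoint sat {M : Type} (RM : M -> M -> Prop) (v : nat -> M) (f : form) : Prop :=
  match f with
  | fR i j => RM (v i) (v j)
  | fEq i j => v i = v j
  | fTrue => True
  | fFalse => False
  | fNot g => ~ sat RM v g
  | fAnd g h => sat RM v g /\ sat RM v h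
  | fOr g h => sat RM v g \/ sat RM v h
  | fImp g h => sat RM v g -> sat RM v h
  | fAll i g => forall m, sat RM (upd v i m) g
  | fEx i g => exists m, sat RM (upd v i m) g
  end.

Definition valid {M : Type} (RM : M -> M -> Prop) (f : form) : Prop :=
  forall v : nat -> M, sat RM v f.

Definition models_ThC (M : Type) (RM : M -> M -> Prop) : Prop :=
  forall f : form, valid RC f -> valid RM f.

(* The partial type { R(x, c_eta) : eta in X } is consistent (over the model M):
   every finite subset is realized in M (compactness). *)
Definition R_type_consistent {M : Type} (RM : M -> M -> Prop) (c : node -> M)
  (X : node -> Prop) : Prop :=
  forall F : list node, (forall eta, In eta F -> X eta) ->
    exists m : M, forall eta, In eta F -> RM m (c eta).

(* Main.v *)
Require Import Defs.
From Stdlib Require Import List.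
From Stdlib Require Import Arith Lia Classical.
Import ListNotations.

Lemma prefix_comparable : forall s s' t, initseg s t -> initseg s' t ->
  initseg s s' \/ initseg s' s.
Proof.
  induction s as [|a s IHs]; intros s' t H H0.
  - left; exists s'; reflexivity.
  - destruct s' as [|b s''].
    + right; exists (a::s); reflexivity.
    + destruct H as [u Hu], H0 as [u' Hu']. subst t. simpl in Hu'.
      injection Hu' as Eab E. subst b.
      destruct (IHs s'' (s ++ u)) as [[w Hw]|[w Hw]].
      * exists u; reflexivity.
      * exists u'; auto.
      * left; exists w; simpl; congruence.
      * right; exists w; simpl; congruence.
Qed.

Lemma initseg_len : forall s t, initseg s t -> length s <= length t.
Proof. intros s t [u ->]. rewrite length_app. lia. Qed.

Lemma initseg_len_eq : forall s t, initseg s t -> length s = length t -> s = t.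
Proof.
  intros s t [u ->] E. rewrite length_app in E.
  destruct u; [rewrite app_nil_r; reflexivity | simpl in E; lia].
Qed.

Lemma len_sum : forall (F : list node) f, In f F ->
  length f <= list_sum (map (@length bool) F).
Proof.
  induction F; simpl; intros f H; [contradiction|].
  destruct H as [->|H]; [lia|]. specialize (IHF f H). lia.
Qed.

Lemma extend_max : forall F : list node,
  (forall s t, In s F -> In t F -> s <> t -> ~ initseg s t /\ ~ initseg t s) ->
  exists Y : MaxAC, forall s, In s F -> proj1_sig Y s.
Proof.
  intros F HF.
  set (N := S (list_sum (map (@length bool) F))).
  assert (HN : forall f, In f F -> length f < N).
  { intros f Hf. pose proof (len_sum F f Hf). unfold N. lia. }
  set (Y := fun s : node => In s F \/
            (length s = N /\ forall f, In f F -> ~ initseg f s)).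
  assert (HY : max_antichain_in (S N) Y).
  { split; [|split].
    - intros s [H|[H _]]; [specialize (HN s H); lia | lia].
    - intros s t Hs Ht Hst.
      destruct Hs as [Hs|[Ls Hs]]; destruct Ht as [Ht|[Lt Ht]].
      + auto.
      + split; [apply Ht; auto|].
        intro I. apply initseg_len in I. specialize (HN s Hs). lia.
      + split; [|apply Hs; auto].
        intro I. apply initseg_len in I. specialize (HN t Ht). lia.
      + split; intro I; apply Hst; apply initseg_len_eq in I; auto; congruence.
    - intros Z Zb Za Sub s Zs.
      destruct (classic (In s F)) as [Hin|Hnin]; [left; auto|right].
      assert (Ha : forall f, In f F -> ~ initseg f s).
      { intros f Hf I. assert (f <> s) by (intro; subst; auto).
        destruct (Za f s (Sub f (or_introl Hf)) Zs H) as [A _]. auto. }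
      assert (Hb : forall f, In f F -> ~ initseg s f).
      { intros f Hf I. assert (s <> f) by (intro; subst; auto).
        destruct (Za s f Zs (Sub f (or_introl Hf)) H) as [A _]. auto. }
      split; [|exact Ha].
      set (t := s ++ repeat false (N - length s)).
      assert (Lt : length t = N).
      { unfold t. rewrite length_app, repeat_length. specialize (Zb s Zs). lia. }
      assert (It : initseg s t) by (exists (repeat false (N - length s)); reflexivity).
      assert (Yt : Y t).
      { right. split; auto. intros f Hf I.
        destruct (prefix_comparable f s t I It) as [J|J].
        - eapply Ha; eauto.
        - eapply Hb; eauto. }
      destruct (classic (s = t)) as [E|E].
      + rewrite E; auto.
      + exfalso. destruct (Za s t Zs (Sub t Yt) E) as [A _]. auto. }
  exists (exist _ Y (ex_intro _ (S N) HY)). simpl. intros s Hs. left; auto.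
Qed.

Theorem proposition6p2 :
  exists (M : Type) (RM : M -> M -> Prop) (c : node -> M),
    models_ThC M RM /\
    forall X : node -> Prop, R_type_consistent RM c X <-> antichain X.
Proof.
  exists Cuniv, RC, b_. split.
  - intros f H; exact H.
  - intros X; split.
    + intros H s t Hs Ht Hst.
      destruct (H [s; t]) as [m Hm].
      { intros e [E|[E|[]]]; subst e; auto. }
      pose proof (Hm s (or_introl eq_refl)) as A.
      pose proof (Hm t (or_intror (or_introl eq_refl))) as B.
      destruct m as [Y|]; [|contradiction]. simpl in A, B.
      destruct Y as [Y0 HY0]. simpl in A, B. destruct HY0 as [n [Hb0 [Hac Hm0]]].
      apply Hac; auto.
    + intros H F HF.
      destruct (extend_max F) as [Y HY].
      { intros s t Hs Ht. apply H; auto. }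
      exists (a_ Y). intros e He. simpl. apply HY; auto.
Qed.
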